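(* Let $N\ge2$ and $\sigma_1,\dots,\sigma_N>0$. Let $R$ be the $(N-1)\times(N-1)$ tridiagonal matrix with $R_{ii}=1$, $R_{i,i+1}=R_{i+1,i}=-1/2$ (other entries $0$), and $A$ the $(N-1)\times(N-1)$ tridiagonal matrix with $A_{ii}=\sigma_i^2+\sigma_{i+1}^2$, $A_{i,i+1}=A_{i+1,i}=-\sigma_{i+1}^2$ (other entries $0$). Then for $1\le k\le l\le N-1$, $$(R^{-1}AR^{-1})_{kl}=\frac{4(N-k)(N-l)}{N^2}\sum_{p=1}^k\sigma_p^2-\frac{4k(N-l)}{N^2}\sum_{p=k+1}^l\sigma_p^2+\frac{4kl}{N^2}\sum_{p=l+1}^N\sigma_p^2.$$ *)

(* Defs.v *)
From mathcomp Require Import all_boot all_order all_algebra.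
Set Implicit Arguments. Unset Strict Implicit. Unset Printing Implicit Defensive.
Import Order.TTheory GRing.Theory Num.Theory.
Local Open Scope ring_scope.

(* Matrices of size (N-1)x(N-1), indexed 0-based by 'I_(N.-1):
   0-based index i corresponds to the paper's 1-based index i+1.
   sigma is indexed 1-based: sigma 1, ..., sigma N. *)

Definition Rmat (F : fieldType) (n : nat) : 'M[F]_n :=
  \matrix_(i < n, j < n)
    (if i == j then 1
     else if ((i.+1 == j) || (j.+1 == i))%N then - (1 / 2%:R) else 0).

Definition Amat (F : fieldType) (n : nat) (sigma : nat -> F) : 'M[F]_n :=
  \matrix_(i < n, j < n)
    (if i == j then sigma i.+1 ^+ 2 + sigma i.+2 ^+ 2
     else if (i.+1 == j)%N then - sigma j.+1 ^+ 2
     else if (j.+1 == i)%N then - sigma i.+1 ^+ 2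
     else 0).

(* Main.v *)
Require Import Defs.
From mathcomp Require Import all_boot all_order all_algebra.
From mathcomp Require Import ring lra zify.
Import Order.TTheory GRing.Theory Num.Theory.
Local Open Scope ring_scope.

Section Helpers.
Variable F : realFieldType.

Lemma sum_ind n m (h : nat -> F) :
  \sum_(0 <= k < n) (if k == m then h k else 0) = if (m < n)%N then h m else 0.
Proof.
elim: n => [|n IH]; first by rewrite big_geq.
rewrite big_nat_recr //= IH.
case: (ltngtP m n) => H.
- by rewrite (ltn_trans H (ltnSn n)) addr0.
- by rewrite ltnS leqNgt H addr0.
- by rewrite H ltnSn add0r.
Qed.

Lemma tri_sum n (i : 'I_n) (x y z f : nat -> F) : f 0%N = 0 -> f n.+1 = 0 ->
  \sum_(k < n) (if i == k then x k else if (i.+1 == k)%N then y k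
               else if (k.+1 == i)%N then z k else 0) * f k.+1
  = x i * f i.+1 + y i.+1 * f i.+2 + z i.-1 * f i.
Proof.
move=> f0 fn.
transitivity (\sum_(0 <= k < n) ((if k == i then x k * f k.+1 else 0)
   + (if k == i.+1 then y k * f k.+1 else 0)
   + (if k.+1 == i then z k * f k.+1 else 0))).
  rewrite big_mkord; apply: eq_bigr => k _.
  rewrite -val_eqE /=.
  case: (eqVneq (i : nat) k) => [<-|ne].
    by rewrite (ltn_eqF (ltnSn i)) (gtn_eqF (ltnSn i)) !addr0.
  rewrite add0r.
  case: (eqVneq i.+1 k) => [<-|ne2].
    by rewrite (gtn_eqF (ltn_trans (ltnSn i) (ltnSn _))) addr0.
  by case: ifP; rewrite ?mul0r ?add0r.
rewrite !big_split /= !sum_ind ltn_ord.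
case: i => [[|i'] Hi] /=.
  rewrite big1 ?addr0 ?f0 ?mulr0 ?addr0 //.
  case: ifP => //; rewrite ltnNge => /negbFE Hn.
  have /eqP En : n == 1%N by rewrite eqn_leq Hn Hi.
  by rewrite En in fn; rewrite fn mulr0.
rewrite (eq_bigr (fun k => if k == i' then z k * f k.+1 else 0)); last first.
  by move=> k _; rewrite eqSS.
rewrite sum_ind (ltn_trans (ltnSn i') Hi).
case: ifP => // ; rewrite ltnNge => /negbFE Hn.
have /eqP En : n == i'.+2 by rewrite eqn_leq Hn Hi.
by rewrite En in fn; rewrite fn mulr0.
Qed.
Variable N : nat.
Hypothesis N0 : N%:R != 0 :> F.

Definition g (a b : nat) : F :=
  if (a <= b)%N then 2 * a%:R * (N%:R - b%:R) / N%:R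
  else 2 * b%:R * (N%:R - a%:R) / N%:R.

Lemma gE1 a b : (a <= b)%N -> g a b = 2 * a%:R * (N%:R - b%:R) / N%:R.
Proof. by rewrite /g => ->. Qed.

Lemma gE2 a b : (b <= a)%N -> g a b = 2 * b%:R * (N%:R - a%:R) / N%:R.
Proof.
rewrite /g; case: ifP => // hab hba.
by have /eqP -> : a == b by rewrite eqn_leq hab hba.
Qed.

Lemma g_sym a b : g a b = g b a.
Proof.
case: (leqP a b) => h; first by rewrite gE1 // gE2.
by rewrite gE2 ?(ltnW h) // gE1 ?(ltnW h).
Qed.

Lemma g0 b : g 0 b = 0.
Proof. by rewrite gE1 // mulr0 !mul0r. Qed.

Lemma gN b : (b <= N)%N -> g N b = 0.
Proof. by move=> h; rewrite gE2 // subrr mulr0 mul0r. Qed.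

Lemma g_lap i j : (i < N.-1)%N -> (j < N.-1)%N ->
  1 * g i.+1 j.+1 + - (1 / 2%:R) * g i.+2 j.+1 + - (1 / 2%:R) * g i j.+1
  = (i == j)%:R.
Proof.
move=> hi hj.
case: (ltngtP i j) => h.
- rewrite (gE1 i.+1); last lia.
  rewrite (gE1 i.+2); last lia.
  rewrite (gE1 i); last lia.
  rewrite /= ?mulr0n ?mulr1n -!natr1. field.
  exact: N0.
- rewrite (gE2 i.+1); last lia.
  rewrite (gE2 i.+2); last lia.
  rewrite (gE2 i); last lia.
  rewrite /= ?mulr0n ?mulr1n -!natr1. field.
  exact: N0.
- subst j. rewrite (gE1 i.+1); last lia.
  rewrite (gE2 i.+2); last lia.
  rewrite (gE1 i); last lia.
  rewrite /= ?mulr0n ?mulr1n -!natr1. field.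
  exact: N0.
Qed.

Definition Gm n : 'M[F]_n := \matrix_(i < n, j < n) g i.+1 j.+1.

Lemma RG : N = (N.-1).+1 -> Rmat F N.-1 *m Gm N.-1 = 1%:M.
Proof.
move=> hN.
apply/matrixP => i j; rewrite !mxE.
rewrite (eq_bigr (fun k : 'I_N.-1 => (if i == k then (fun _ => 1) k else if (i.+1 == k)%N then (fun _ => - (1 / 2%:R)) k
               else if (k.+1 == i)%N then (fun _ => - (1 / 2%:R)) k else 0) * (fun p => g p j.+1) k.+1)); last first.
  move=> k _; rewrite !mxE.
  by case: (i == k) => //; case: (i.+1 == k)%N => //.
rewrite (@tri_sum _ i (fun _ => 1) (fun _ => -(1/2%:R)) (fun _ => -(1/2%:R)) (fun p => g p j.+1)); first exact: g_lap.
  exact: g0.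
by rewrite -hN gN //; apply: leq_trans (ltn_ord j) _; rewrite {2}hN.
Qed.
Definition D b p := g p b - g p.-1 b.

Lemma D_le b p : (0 < p <= b)%N -> D b p = 2 * (N%:R - b%:R) / N%:R.
Proof.
case: p => [//|q] /= hq; rewrite /D /=.
rewrite (gE1 q.+1) ?(gE1 q); try lia.
rewrite -natr1; field; exact: N0.
Qed.

Lemma D_gt b p : (b < p)%N -> D b p = - (2 * b%:R) / N%:R.
Proof.
case: p => [//|q] /= hq; rewrite /D /=.
rewrite (gE2 q.+1) ?(gE2 q); try lia.
rewrite -natr1; field; exact: N0.
Qed.

Lemma abel n (h w : nat -> F) : N = n.+1 -> w 0%N = 0 -> w N = 0 ->
  \sum_(m < n) w m.+1 * (h m.+1 - h m.+2)
  = \sum_(1 <= p < N.+1) h p * (w p - w p.-1).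
Proof.
move=> hN w0 wN.
under eq_bigr do rewrite mulrBr.
rewrite sumrB.
under [in RHS]eq_bigr do rewrite mulrBr.
rewrite [in RHS]sumrB.
congr (_ - _).
  rewrite big_nat_recr /=; last lia.
  rewrite wN mulr0 addr0 big_add1 /= hN /= big_mkord.
  by apply: eq_bigr => i _; rewrite mulrC.
rewrite big_ltn; last lia.
rewrite /= w0 mulr0 add0r big_add1 /= big_add1 /= hN /= big_mkord.
by apply: eq_bigr => i _; rewrite mulrC.
Qed.

End Helpers.

Lemma invR (F : realFieldType) N : N%:R != 0 :> F -> N = (N.-1).+1 ->
  invmx (Rmat F N.-1) = Gm F N N.-1.
Proof.
move=> N0 hN.
have h := @RG F N N0 hN.
have [uR _] := mulmx1_unit h.
by rewrite -[LHS]mulmx1 -h mulmxA mulVmx // mul1mx.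
Qed.

Lemma AG (F : realFieldType) N (sigma : nat -> F) (m l : 'I_N.-1) :
  N = (N.-1).+1 ->
  (Amat N.-1 sigma *m Gm F N N.-1) m l =
  sigma m.+1 ^+ 2 * D F N l.+1 m.+1 - sigma m.+2 ^+ 2 * D F N l.+1 m.+2.
Proof.
move=> hN; rewrite !mxE.
under eq_bigr do rewrite !mxE.
rewrite (@tri_sum _ _ m (fun _ => sigma m.+1 ^+ 2 + sigma m.+2 ^+ 2)
   (fun k => - sigma k.+1 ^+ 2) (fun _ => - sigma m.+1 ^+ 2) (fun p => g F N p l.+1)).
- rewrite /D /=; ring.
- exact: g0.
- by rewrite -hN gN //; apply: leq_trans (ltn_ord l) _; rewrite {2}hN.
Qed.

Theorem lemma4p5 (F : realFieldType) (N : nat) (sigma : nat -> F)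
  (hN : (2 <= N)%N)
  (hsigma : forall p : nat, (1 <= p <= N)%N -> 0 < sigma p)
  (k l : 'I_(N.-1)) (hkl : (k <= l)%N) :
  (invmx (Rmat F N.-1) *m Amat N.-1 sigma *m invmx (Rmat F N.-1)) k l =
    (4 * ((N - k.+1)%N)%:R * ((N - l.+1)%N)%:R / (N ^ 2)%:R)
      * (\sum_(1 <= p < k.+2) sigma p ^+ 2)
    - (4 * (k.+1)%:R * ((N - l.+1)%N)%:R / (N ^ 2)%:R)
      * (\sum_(k.+2 <= p < l.+2) sigma p ^+ 2)
    + (4 * (k.+1)%:R * (l.+1)%:R / (N ^ 2)%:R)
      * (\sum_(l.+2 <= p < N.+1) sigma p ^+ 2).
Proof.
have hN' : N = N.-1.+1 by lia.
have N0 : N%:R != 0 :> F by rewrite pnatr_eq0; lia.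
have hk := ltn_ord k. have hl := ltn_ord l.
rewrite invR // -mulmxA mxE.
under eq_bigr do rewrite AG // mxE.
rewrite (@abel F N N0 N.-1 (fun p => sigma p ^+ 2 * D F N l.+1 p) (g F N k.+1)) //; first last.
- by rewrite g_sym gN //; lia.
- by rewrite g_sym g0.
under eq_bigr do rewrite (g_sym _ _ k.+1) (g_sym _ _ k.+1).
rewrite (@big_cat_nat _ _ _ k.+2) //; last lia.
rewrite (@big_cat_nat _ _ _ l.+2 k.+2) //; try lia.
rewrite /= (@eq_big_nat _ _ _ 1 k.+2 _ (fun p => sigma p ^+ 2 * ((2 * (N%:R - l.+1%:R) / N%:R) * (2 * (N%:R - k.+1%:R) / N%:R)))); last first.
  move=> p hp; rewrite -/(D F N k.+1 p) D_le ?D_le ?mulrA //; lia.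
rewrite /= (@eq_big_nat _ _ _ k.+2 l.+2 _ (fun p => sigma p ^+ 2 * ((2 * (N%:R - l.+1%:R) / N%:R) * (- (2 * k.+1%:R) / N%:R)))); last first.
  move=> p hp; rewrite -/(D F N k.+1 p) D_le ?D_gt ?mulrA //; lia.
rewrite /= (@eq_big_nat _ _ _ l.+2 N.+1 _ (fun p => sigma p ^+ 2 * ((- (2 * l.+1%:R) / N%:R) * (- (2 * k.+1%:R) / N%:R)))); last first.
  move=> p hp; rewrite -/(D F N k.+1 p) D_gt ?D_gt ?mulrA //; lia.
rewrite -!mulr_suml natrX !natrB; try lia.
field; exact: N0.
Qed.
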